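(* Let $\Gamma=S(\Lambda,V)$ and let $\sigma\in Z^2(\Gamma,U(1))$ be a 2-cocycle. Then $\sigma$ is cohomologous to a real cocycle, that is, to an element of $Z^2(\Gamma,U(1))$ of the form $\exp(2\pi i\zeta)$ with $\zeta\in Z^2(\Gamma,\mathbb{R})$.
   Context: Let $\mathbb{K}$ be a real quadratic field with real embeddings $\iota_1,\iota_2$. Let $L\subset\mathbb{K}$ be a lattice (free $\mathbb{Z}$-module of rank 2 spanning $\mathbb{K}$), and $V=\epsilon^{\mathbb{Z}}$ the group of totally positive units $u$ with $uL\subset L$, or a finite index subgroup, with $\epsilon=\iota_1(\epsilon)>1$, $\iota_2(\epsilon)=\epsilon^{-1}$. Let $\Lambda=\{(\iota_1(\ell),\iota_2(\ell)):\ell\in L\}\subset\mathbb{R}^2$, $A_\epsilon=\mathrm{diag}(\epsilon,\epsilon^{-1})$, and $S(\Lambda,V)=\Lambda\rtimes\mathbb{Z}$ with product $(\lambda,k)(\eta,r)=(\lambda+A_\epsilon^k\eta,k+r)$. Group cohomology with coefficients in $U(1)$, $\mathbb{R}$, $\mathbb{Z}$ is with trivial action. *)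

(* Defs.v *)
From Stdlib Require Import Reals QArith ZArith Lra.
From Coquelicot Require Import Coquelicot.
Open Scope R_scope.

(** Real quadratic field K = Q(sqrt d), d a non-square natural number.
    An element a + b sqrt d of K is represented by its coordinates (a,b) : Q*Q. *)
Definition nonsquare (d : nat) : Prop := ~ (exists k : nat, (k * k)%nat = d).

Definition Kel := (Q * Q)%type.

Definition iota1 (d : nat) (x : Kel) : R := Q2R (fst x) + Q2R (snd x) * sqrt (INR d).
Definition iota2 (d : nat) (x : Kel) : R := Q2R (fst x) - Q2R (snd x) * sqrt (INR d).

Definition Kmul (d : nat) (x y : Kel) : Kel :=
  ((fst x * fst y + inject_Z (Z.of_nat d) * snd x * snd y)%Q,
   (fst x * snd y + snd x * fst y)%Q).

Definition Keq (x y : Kel) : Prop := (fst x == fst y)%Q /\ (snd x == snd y)%Q.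

Definition Zcomb (m n : Z) (w1 w2 : Kel) : Kel :=
  ((inject_Z m * fst w1 + inject_Z n * fst w2)%Q,
   (inject_Z m * snd w1 + inject_Z n * snd w2)%Q).

(** The lattice L = Z w1 + Z w2; it is a lattice (spans K over Q) iff w1,w2
    are Q-linearly independent. *)
Definition spans_K (w1 w2 : Kel) : Prop :=
  ~ (fst w1 * snd w2 - fst w2 * snd w1 == 0)%Q.

Definition inL (w1 w2 : Kel) (l : Kel) : Prop := exists m n : Z, Keq l (Zcomb m n w1 w2).

Definition stabilizes (d : nat) (w1 w2 u : Kel) : Prop :=
  forall l, inL w1 w2 l -> inL w1 w2 (Kmul d u l).

Definition inLambda (d : nat) (w1 w2 : Kel) (x : R * R) : Prop :=
  exists l, inL w1 w2 l /\ x = (iota1 d l, iota2 d l).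

(** The group Gamma = S(Lambda, V) = Lambda ⋊ Z, elements ((x1,x2),k). *)
Definition Gam := ((R * R) * Z)%type.

Definition inGamma (d : nat) (w1 w2 : Kel) (g : Gam) : Prop := inLambda d w1 w2 (fst g).

(* A_eps^k applied to y, with e = iota1 eps *)
Definition Apow (e : R) (k : Z) (y : R * R) : R * R :=
  (powerRZ e k * fst y, powerRZ e (- k) * snd y).

Definition Gmul (e : R) (g h : Gam) : Gam :=
  let y := Apow e (snd g) (fst h) in
  ((fst (fst g) + fst y, snd (fst g) + snd y), (snd g + snd h)%Z).

Definition is_U1_cocycle (G : Gam -> Prop) (mul : Gam -> Gam -> Gam)
    (s : Gam -> Gam -> C) : Prop :=
  (forall g h, G g -> G h -> Cmod (s g h) = 1) /\
  (forall g h k, G g -> G h -> G k ->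
     Cmult (s g h) (s (mul g h) k) = Cmult (s h k) (s g (mul h k))).

Definition is_R_cocycle (G : Gam -> Prop) (mul : Gam -> Gam -> Gam)
    (z : Gam -> Gam -> R) : Prop :=
  forall g h k, G g -> G h -> G k ->
     z g h + z (mul g h) k = z h k + z g (mul h k).

Definition e2pi (t : R) : C := (cos (2 * PI * t), sin (2 * PI * t)).

Definition cohomologous (G : Gam -> Prop) (mul : Gam -> Gam -> Gam)
    (s s' : Gam -> Gam -> C) : Prop :=
  exists beta : Gam -> C,
    (forall g, G g -> Cmod (beta g) = 1) /\
    (forall g h, G g -> G h ->
       s g h = Cmult (s' g h) (Cmult (Cmult (beta g) (beta h)) (Cinv (beta (mul g h))))).

(* Main.v *)
Require Import Defs.
From Stdlib Require Import Reals QArith ZArith.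
From Coquelicot Require Import Coquelicot.
From Stdlib Require Import Lra Lia Qreals Classical ClassicalEpsilon.
Open Scope R_scope.

Definition isint (r : R) : Prop := exists z : Z, r = IZR z.
Definition eqz (x y : R) : Prop := isint (x - y).

Lemma isint_0 : isint 0. Proof. exists 0%Z; reflexivity. Qed.
Lemma isint_IZR z : isint (IZR z). Proof. exists z; reflexivity. Qed.
Lemma isint_add a b : isint a -> isint b -> isint (a + b).
Proof. intros [z1 ->] [z2 ->]; exists (z1+z2)%Z; rewrite plus_IZR; ring. Qed.
Lemma isint_opp a : isint a -> isint (- a).
Proof. intros [z1 ->]; exists (-z1)%Z; rewrite opp_IZR; ring. Qed.
Lemma isint_sub a b : isint a -> isint b -> isint (a - b).
Proof. intros; unfold Rminus; apply isint_add; auto; apply isint_opp; auto. Qed.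
Lemma isint_mulz z a : isint a -> isint (IZR z * a).
Proof. intros [z1 ->]; exists (z*z1)%Z; rewrite mult_IZR; ring. Qed.
Lemma isint_eq a b : a = b -> isint a -> isint b. Proof. intros ->; auto. Qed.

Lemma eqz_refl x : eqz x x. Proof. unfold eqz; replace (x-x) with 0 by ring; apply isint_0. Qed.
Lemma eqz_eq x y : x = y -> eqz x y. Proof. intros ->; apply eqz_refl. Qed.
Lemma eqz_sym x y : eqz x y -> eqz y x.
Proof. unfold eqz; intro H; replace (y-x) with (-(x-y)) by ring; apply isint_opp; auto. Qed.
Lemma eqz_trans x y z : eqz x y -> eqz y z -> eqz x z.
Proof. unfold eqz; intros; replace (x-z) with ((x-y)+(y-z)) by ring; apply isint_add; auto. Qed.
Lemma eqz_add a b c d : eqz a b -> eqz c d -> eqz (a+c) (b+d).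
Proof. unfold eqz; intros; replace (a+c-(b+d)) with ((a-b)+(c-d)) by ring; apply isint_add; auto. Qed.
Lemma eqz_sub a b c d : eqz a b -> eqz c d -> eqz (a-c) (b-d).
Proof. unfold eqz; intros; replace (a-c-(b-d)) with ((a-b)-(c-d)) by ring; apply isint_sub; auto. Qed.
Lemma eqz_mulz z a b : eqz a b -> eqz (IZR z * a) (IZR z * b).
Proof. unfold eqz; intros; replace (IZR z * a - IZR z * b) with (IZR z * (a-b)) by ring; apply isint_mulz; auto. Qed.
Lemma eqz_req a b c d : a = b -> c = d -> eqz a c -> eqz b d.
Proof. intros -> ->; auto. Qed.

Lemma e2pi_add x y : e2pi (x + y) = Cmult (e2pi x) (e2pi y).
Proof.
  unfold e2pi, Cmult; simpl. replace (2*PI*(x+y)) with (2*PI*x + 2*PI*y) by ring.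
  rewrite cos_plus, sin_plus. f_equal; ring.
Qed.
Lemma e2pi_mod x : Cmod (e2pi x) = 1.
Proof.
  unfold e2pi, Cmod; simpl. replace (cos (2*PI*x) * (cos (2*PI*x) * 1) + sin (2*PI*x) * (sin (2*PI*x)*1))
   with ((sin (2*PI*x))² + (cos (2*PI*x))²) by (unfold Rsqr; ring).
  rewrite sin2_cos2. apply sqrt_1.
Qed.
Lemma e2pi_int z : e2pi (IZR z) = (1, 0).
Proof.
  unfold e2pi. replace (2*PI*IZR z) with (2 * (IZR z * PI)) by ring.
  assert (H : sin (IZR z * PI) = 0) by (apply sin_eq_0_1; eauto).
  rewrite cos_2a_sin, sin_2a, H. f_equal; ring.
Qed.
Lemma e2pi_eqz x y : eqz x y -> e2pi x = e2pi y.
Proof.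
  intros [z Hz]. replace x with (y + IZR z) by lra. rewrite e2pi_add, e2pi_int.
  destruct (e2pi y) as [a b]; unfold Cmult; simpl; f_equal; ring.
Qed.
Lemma e2pi_inv x : Cinv (e2pi x) = e2pi (- x).
Proof.
  unfold e2pi, Cinv; simpl. replace (2*PI*-x) with (-(2*PI*x)) by ring.
  rewrite cos_neg, sin_neg.
  replace (cos (2*PI*x) * (cos (2*PI*x) * 1) + sin (2*PI*x) * (sin (2*PI*x)*1))
   with ((sin (2*PI*x))² + (cos (2*PI*x))²) by (unfold Rsqr; ring).
  rewrite sin2_cos2. f_equal; field.
Qed.
Lemma e2pi_inj x y : e2pi x = e2pi y -> eqz x y.
Proof.
  unfold e2pi; intro H. injection H as Hc Hs.
  assert (Hc2 : cos (2*PI*(x-y)) = 1).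
  { replace (2*PI*(x-y)) with (2*PI*x - 2*PI*y) by ring. rewrite cos_minus, Hc, Hs.
    rewrite Rplus_comm. replace (sin (2*PI*y) * sin (2*PI*y) + cos (2*PI*y) * cos (2*PI*y))
     with ((sin (2*PI*y))² + (cos (2*PI*y))²) by (unfold Rsqr; ring). apply sin2_cos2. }
  replace (2*PI*(x-y)) with (2*(PI*(x-y))) in Hc2 by ring.
  rewrite cos_2a_sin in Hc2.
  assert (Hs0 : sin (PI*(x-y)) = 0).
  { assert (H0 : sin (PI*(x-y)) * sin (PI*(x-y)) = 0) by (unfold Rsqr in Hc2; lra). destruct (Rmult_integral _ _ H0); auto. }
  destruct (sin_eq_0_0 _ Hs0) as [k Hk]. exists k. pose proof PI_RGT_0.
  apply (Rmult_eq_reg_l PI); [|lra]. rewrite Hk; ring.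
Qed.
Lemma unit_arg (z : C) : Cmod z = 1 -> exists t, z = e2pi t.
Proof.
  destruct z as [x y]; unfold Cmod; simpl; intro H.
  assert (H1 : x*x + y*y = 1).
  { assert (Hn : 0 <= x*(x*1) + y*(y*1)) by nra.
    pose proof (sqrt_sqrt _ Hn). rewrite H in H0. lra. }
  assert (Hb : -1 <= x <= 1) by nra.
  pose proof PI_RGT_0.
  destruct (Rle_or_lt 0 y) as [Hy|Hy].
  - exists (acos x / (2*PI)). unfold e2pi. replace (2*PI*(acos x/(2*PI))) with (acos x) by (field; lra).
    rewrite cos_acos, sin_acos by auto. f_equal.
    replace (1 - x²) with (y*y) by (unfold Rsqr; lra). rewrite sqrt_square; auto.
  - exists (- acos x / (2*PI)). unfold e2pi. replace (2*PI*(-acos x/(2*PI))) with (- acos x) by (field; lra).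
    rewrite cos_neg, sin_neg, cos_acos, sin_acos by auto. f_equal.
    replace (1 - x²) with ((-y)*(-y)) by (unfold Rsqr; lra). rewrite sqrt_square; lra.
Qed.

Lemma zadd_lin (h : Z -> R) :
  (forall a b, eqz (h (a+b)%Z) (h a + h b)) -> forall a, eqz (h a) (IZR a * h 1%Z).
Proof.
  intros Hadd a. induction a using Z.peano_ind.
  - pose proof (Hadd 0%Z 0%Z) as H. simpl in H. unfold eqz in *.
    eapply isint_eq; [|exact (isint_opp _ H)]. ring.
  - rewrite <- Z.add_1_r. eapply eqz_trans; [apply Hadd|]. rewrite plus_IZR.
    eapply eqz_req; [reflexivity| |apply eqz_add; [exact IHa| apply eqz_refl]]. ring.
  - rewrite <- Z.sub_1_r. pose proof (Hadd (a-1)%Z 1%Z) as H. replace (a-1+1)%Z with a in H by lia.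
    rewrite minus_IZR. unfold eqz in *.
    eapply isint_eq; [|exact (isint_sub _ _ IHa H)]. ring.
Qed.

Fixpoint Spos (h : Z -> R) (k : nat) : R :=
  match k with O => 0 | S k' => Spos h k' + h (Z.of_nat k') end.
Fixpoint Sneg (h : Z -> R) (k : nat) : R :=
  match k with O => 0 | S k' => Sneg h k' - h (- Z.of_nat (S k'))%Z end.
Definition SZ (h : Z -> R) (n : Z) : R :=
  if (0 <=? n)%Z then Spos h (Z.to_nat n) else Sneg h (Z.to_nat (- n)).

Lemma SZ_succ h n : SZ h (n + 1) = SZ h n + h n.
Proof.
  unfold SZ. destruct (Z.leb_spec 0 n).
  - destruct (Z.leb_spec 0 (n+1)); [|lia].
    replace (Z.to_nat (n+1)) with (S (Z.to_nat n)) by lia. simpl.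
    rewrite Z2Nat.id by lia. reflexivity.
  - destruct (Z.leb_spec 0 (n+1)).
    + assert (n = -1)%Z by lia. subst. simpl. ring.
    + replace (Z.to_nat (- n)) with (S (Z.to_nat (-(n+1)))) by lia. cbn [Sneg].
      replace (- Z.of_nat (S (Z.to_nat (- (n + 1)))))%Z with n by lia. ring.
Qed.

Definition zcocy (f : Z -> Z -> R) : Prop :=
  forall k l m, eqz (f k l + f (k+l)%Z m) (f l m + f k (l+m)%Z).

Lemma zcocy_cob (f : Z -> Z -> R) : zcocy f ->
  exists b : Z -> R, forall k l, eqz (f k l) (b k + b l - b (k+l)%Z).
Proof.
  intros Hf.
  set (b := fun n => f 1%Z 0%Z - SZ (fun j => f 1%Z j) n).
  exists b.
  assert (Hb : forall n, b (n+1)%Z = b n - f 1%Z n).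
  { intro n; unfold b; rewrite SZ_succ; ring. }
  assert (Hb0 : b 0%Z = f 1%Z 0%Z) by (unfold b, SZ; simpl; ring).
  assert (Hb1 : b 1%Z = 0) by (pose proof (Hb 0%Z) as H; simpl in H; rewrite H, Hb0; ring).
  set (g := fun k l => f k l - (b k + b l - b (k+l)%Z)).
  assert (Hg : zcocy g).
  { intros k l m; unfold g. pose proof (Hf k l m) as H. unfold eqz in *.
    eapply isint_eq; [|exact H]. rewrite Z.add_assoc. ring. }
  assert (Hg1 : forall n, g 1%Z n = 0).
  { intro n; unfold g. rewrite Z.add_comm, Hb, Hb1; ring. }
  assert (H00 : eqz (g 0%Z 0%Z) 0).
  { unfold g. change (0+0)%Z with 0%Z. rewrite Hb0.
    pose proof (Hf 1%Z 0%Z 0%Z) as H. simpl in H. unfold eqz in *.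
    eapply isint_eq; [|exact (isint_opp _ H)]. ring. }
  assert (H0n : forall n, eqz (g 0%Z n) 0).
  { intro n. pose proof (Hg 0%Z 0%Z n) as H. simpl in H. unfold eqz in *.
    eapply isint_eq; [|exact (isint_sub _ _ H00 H)]. ring. }
  assert (Hall : forall m n, eqz (g m n) 0).
  { intro m; induction m using Z.peano_ind; intro n.
    - apply H0n.
    - pose proof (Hg 1%Z m n) as H. rewrite Hg1, Hg1 in H.
      rewrite <- Z.add_1_l. unfold eqz in *.
      eapply isint_eq; [|exact (isint_add _ _ H (IHm n))]. ring.
    - pose proof (Hg 1%Z (Z.pred m) n) as H. rewrite Hg1, Hg1 in H.
      replace (1 + Z.pred m)%Z with m in H by lia. unfold eqz in *.
      eapply isint_eq; [|exact (isint_sub _ _ (IHm n) H)]. ring. }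
  intros k l. pose proof (Hall k l) as H. unfold g, eqz in *.
  eapply isint_eq; [|exact H]. ring.
Qed.

Section Generic.
Variables (T : Type) (P : T -> Prop) (mul : T -> T -> T).
Hypothesis mulP : forall g h, P g -> P h -> P (mul g h).
Hypothesis assoc : forall g h k, mul (mul g h) k = mul g (mul h k).

Definition cocyZ (th : T -> T -> R) : Prop :=
  forall g h k, P g -> P h -> P k ->
    eqz (th g h + th (mul g h) k) (th h k + th g (mul h k)).
Definition cohZ (th th' : T -> T -> R) : Prop :=
  exists b : T -> R, forall g h, P g -> P h ->
    eqz (th g h) (th' g h + (b g + b h - b (mul g h))).

Lemma cohZ_refl th : cohZ th th.
Proof. exists (fun _ => 0). intros; apply eqz_eq; ring. Qed.
Lemma cohZ_trans a b c : cohZ a b -> cohZ b c -> cohZ a c.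
Proof.
  intros [b1 H1] [b2 H2]. exists (fun g => b1 g + b2 g). intros g h Hg Hh.
  pose proof (H1 g h Hg Hh). pose proof (H2 g h Hg Hh). unfold eqz in *.
  eapply isint_eq; [|exact (isint_add _ _ H H0)]. ring.
Qed.
Lemma cohZ_pt a b : (forall g h, P g -> P h -> eqz (a g h) (b g h)) -> cohZ a b.
Proof. intros H. exists (fun _ => 0). intros g h Hg Hh. eapply eqz_req; [reflexivity| |apply H; auto]. ring. Qed.
Lemma cohZ_cob a b (c : T -> R) : (forall g h, P g -> P h -> a g h = b g h + (c g + c h - c (mul g h))) -> cohZ a b.
Proof. intros H. exists c. intros; apply eqz_eq; auto. Qed.

Lemma cohZ_cocy a b : cocyZ a -> cohZ a b -> cocyZ b.
Proof.
  intros Ha [c Hc] g h k Pg Ph Pk.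
  pose proof (Ha g h k Pg Ph Pk).
  pose proof (Hc g h Pg Ph). pose proof (Hc (mul g h) k (mulP _ _ Pg Ph) Pk).
  pose proof (Hc h k Ph Pk). pose proof (Hc g (mul h k) Pg (mulP _ _ Ph Pk)).
  rewrite assoc in *. unfold eqz in *.
  eapply isint_eq; [|exact (isint_add _ _ (isint_sub _ _ (isint_sub _ _ (isint_add _ _ H H2) H0) H1) H3)]. ring.
Qed.

Variable one : T.
Hypothesis oneP : P one.
Hypothesis one_l : forall g, mul one g = g.
Hypothesis one_r : forall g, mul g one = g.

Lemma unit_l th g : cocyZ th -> P g -> eqz (th one g) (th one one).
Proof.
  intros H Pg. pose proof (H one one g oneP oneP Pg). rewrite !one_l in H0.
  unfold eqz in *. eapply isint_eq; [|exact (isint_opp _ H0)]. ring.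
Qed.
Lemma unit_r th g : cocyZ th -> P g -> eqz (th g one) (th one one).
Proof.
  intros H Pg. pose proof (H g one one Pg oneP oneP). rewrite !one_r in H0.
  unfold eqz in *. eapply isint_eq; [|exact H0]. ring.
Qed.

Variables (Q : T -> Prop) (tp : Z -> T) (al : Z -> T -> T) (nf : T -> T) (kf : T -> Z).
Hypothesis QP : forall n, Q n -> P n.
Hypothesis mulQ : forall n m, Q n -> Q m -> Q (mul n m).
Hypothesis tpP : forall k, P (tp k).
Hypothesis tpadd : forall k l, mul (tp k) (tp l) = tp (k + l)%Z.
Hypothesis tp0 : tp 0%Z = one.
Hypothesis Qone : Q one.
Hypothesis nfQ : forall g, P g -> Q (nf g).
Hypothesis nfdec : forall g, P g -> g = mul (nf g) (tp (kf g)).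
Hypothesis nf_mul : forall n k, Q n -> nf (mul n (tp k)) = n.
Hypothesis kf_mul : forall n k, Q n -> kf (mul n (tp k)) = k.
Hypothesis alQ : forall k n, Q n -> Q (al k n).
Hypothesis conj : forall k n, Q n -> mul (tp k) n = mul (al k n) (tp k).

Definition normal th := (forall n k, Q n -> eqz (th n (tp k)) 0) /\
                        (forall k l, eqz (th (tp k) (tp l)) 0).

Lemma nf_Q n : Q n -> nf n = n.
Proof. intros. rewrite <- (one_r n) at 1. rewrite <- tp0. auto. Qed.
Lemma kf_Q n : Q n -> kf n = 0%Z.
Proof. intros. rewrite <- (one_r n) at 1. rewrite <- tp0. auto. Qed.
Lemma nf_tp k : nf (tp k) = one.
Proof. rewrite <- (one_l (tp k)). auto. Qed.
Lemma kf_tp k : kf (tp k) = k.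
Proof. rewrite <- (one_l (tp k)). auto. Qed.

Lemma normalize th : cocyZ th -> exists th', cohZ th th' /\ cocyZ th' /\ normal th'.
Proof.
  intros Hth.
  destruct (zcocy_cob (fun k l => th (tp k) (tp l))) as [bz Hbz].
  { intros k l m. pose proof (Hth (tp k) (tp l) (tp m) (tpP k) (tpP l) (tpP m)).
    rewrite !tpadd in H. exact H. }
  set (th1 := fun g h => th g h - (bz (kf g) + bz (kf h) - bz (kf (mul g h)))).
  assert (C1 : cohZ th th1).
  { apply (cohZ_cob _ _ (fun g => bz (kf g))). intros; unfold th1; ring. }
  assert (Hth1 : cocyZ th1) by (apply (cohZ_cocy th); auto).
  assert (H11 : eqz (th1 one one) 0).
  { unfold th1. rewrite one_l, <- tp0, kf_tp. pose proof (Hbz 0%Z 0%Z). simpl in H.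
    unfold eqz in *. eapply isint_eq; [|exact H]. ring. }
  set (b2 := fun g => th1 (nf g) (tp (kf g))).
  set (th2 := fun g h => th1 g h + (b2 g + b2 h - b2 (mul g h))).
  exists th2.
  assert (C2 : cohZ th1 th2).
  { apply (cohZ_cob _ _ (fun g => - b2 g)). intros; unfold th2; ring. }
  split; [apply (cohZ_trans _ th1); auto|].
  split; [apply (cohZ_cocy th1); auto|].
  split.
  - intros n k Qn. unfold th2, b2.
    rewrite nf_mul, kf_mul, nf_Q, kf_Q, nf_tp, kf_tp, tp0 by auto.
    pose proof (unit_r th1 n Hth1 (QP n Qn)).
    pose proof (unit_l th1 (tp k) Hth1 (tpP k)). rewrite <- tp0 in *.
    unfold eqz in *. eapply isint_eq; [|exact (isint_add _ _ (isint_add _ _ H H0) (isint_add _ _ H11 H11))].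
    rewrite tp0. ring.
  - intros k l. unfold th2, b2. rewrite tpadd, !nf_tp, !kf_tp.
    pose proof (unit_l th1 (tp k) Hth1 (tpP k)).
    pose proof (unit_l th1 (tp l) Hth1 (tpP l)).
    pose proof (unit_l th1 (tp (k+l)) Hth1 (tpP (k+l))).
    assert (eqz (th1 (tp k) (tp l)) 0).
    { unfold th1. rewrite tpadd, !kf_tp. pose proof (Hbz k l). unfold eqz in *.
      eapply isint_eq; [|exact H2]. ring. }
    unfold eqz in *.
    eapply isint_eq; [|exact (isint_add _ _ (isint_sub _ _ (isint_add _ _ H2 H) H1) (isint_add _ _ H0 H11))].
    ring.
Qed.

Lemma shape th : cocyZ th -> normal th -> forall n m k l, Q n -> Q m ->
  eqz (th (mul n (tp k)) (mul m (tp l))) (th (tp k) m + th n (al k m)).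
Proof.
  intros Hc [N1 N2] n m k l Qn Qm.
  assert (Pn := QP _ Qn). assert (Pm := QP _ Qm). assert (Qa := alQ k _ Qm). assert (Pa := QP _ Qa).
  pose proof (Hc n (tp k) (mul m (tp l)) Pn (tpP k) (mulP _ _ Pm (tpP l))) as C1.
  assert (E1 : mul (tp k) (mul m (tp l)) = mul (al k m) (tp (k+l))).
  { rewrite <- assoc, conj, assoc, tpadd by auto. reflexivity. }
  rewrite E1 in C1.
  pose proof (Hc n (al k m) (tp (k+l)) Pn Pa (tpP _)) as C2.
  pose proof (Hc (tp k) m (tp l) (tpP k) Pm (tpP l)) as C3.
  rewrite conj in C3 by auto.
  pose proof (Hc (al k m) (tp k) (tp l) Pa (tpP k) (tpP l)) as C4.
  rewrite tpadd in C4.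
  pose proof (N1 n k Qn). pose proof (N1 _ (k+l)%Z (mulQ _ _ Qn Qa)).
  pose proof (N1 _ (k+l)%Z Qa). pose proof (N1 _ k Qa). pose proof (N1 m l Qm). pose proof (N2 k l).
  unfold eqz in *.
  eapply isint_eq; [|exact (isint_sub _ _ (isint_add _ _ (isint_sub _ _ (isint_sub _ _ C1 C2) (isint_sub _ _ C3 C4)) (isint_sub _ _ (isint_add _ _ H0 H4) (isint_add _ _ H H3))) H2)].
  ring.
Qed.

End Generic.

Definition vadd (x y : R * R) : R * R := (fst x + fst y, snd x + snd y).
Definition zf (r : R) : Z := (up r - 1)%Z.
Lemma zf_IZR z : zf (IZR z) = z.
Proof.
  unfold zf. rewrite <- (tech_up (IZR z) (z+1)); [lia| |]; rewrite plus_IZR; lra.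
Qed.

Section Lam.
Variables p1 p2 q1 q2 : R.
Hypothesis HD : p1 * q2 - q1 * p2 <> 0.
Let D := p1 * q2 - q1 * p2.

Definition lv (m n : Z) : R * R := (IZR m * p1 + IZR n * q1, IZR m * p2 + IZR n * q2).
Definition PL (x : R * R) : Prop := exists m n : Z, x = lv m n.
Definition qv (a : Z) : R * R := (IZR a * p1, IZR a * p2).
Definition QL (x : R * R) : Prop := exists a : Z, x = qv a.
Definition tpL (k : Z) : R * R := (IZR k * q1, IZR k * q2).
Definition c1 (x : R * R) : R := (q2 * fst x - q1 * snd x) / (p1 * q2 - q1 * p2).
Definition c2 (x : R * R) : R := (p1 * snd x - p2 * fst x) / (p1 * q2 - q1 * p2).
Definition kfL (x : R * R) : Z := zf (c2 x).
Definition afL (x : R * R) : Z := zf (c1 x).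
Definition nfL (x : R * R) : R * R := (fst x - IZR (kfL x) * q1, snd x - IZR (kfL x) * q2).

Lemma c1_lv m n : c1 (lv m n) = IZR m.
Proof. unfold c1, lv; simpl. field. exact HD. Qed.
Lemma c2_lv m n : c2 (lv m n) = IZR n.
Proof. unfold c2, lv; simpl. field. exact HD. Qed.
Lemma pair_eq (a b c d : R) : a = c -> b = d -> (a, b) = (c, d).
Proof. intros -> ->; reflexivity. Qed.

Lemma PL_add x y : PL x -> PL y -> PL (vadd x y).
Proof. intros [m [n ->]] [m' [n' ->]]. exists (m+m')%Z, (n+n')%Z. unfold lv, vadd; simpl.
  rewrite !plus_IZR; apply pair_eq; ring. Qed.
Lemma vadd_assoc x y z : vadd (vadd x y) z = vadd x (vadd y z).
Proof. unfold vadd; simpl; apply pair_eq; ring. Qed.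
Lemma vadd_comm x y : vadd x y = vadd y x.
Proof. unfold vadd; apply pair_eq; ring. Qed.
Lemma PL_0 : PL (0,0).
Proof. exists 0%Z, 0%Z. unfold lv; apply pair_eq; simpl; ring. Qed.
Lemma vadd_0l x : vadd (0,0) x = x.
Proof. destruct x; unfold vadd; simpl; apply pair_eq; ring. Qed.
Lemma vadd_0r x : vadd x (0,0) = x.
Proof. destruct x; unfold vadd; simpl; apply pair_eq; ring. Qed.
Lemma QL_PL n : QL n -> PL n.
Proof. intros [a ->]. exists a, 0%Z. unfold qv, lv; apply pair_eq; simpl; ring. Qed.
Lemma QL_add n m : QL n -> QL m -> QL (vadd n m).
Proof. intros [a ->] [b ->]. exists (a+b)%Z. unfold qv, vadd; simpl; rewrite plus_IZR; apply pair_eq; ring. Qed.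
Lemma tpL_PL k : PL (tpL k).
Proof. exists 0%Z, k. unfold tpL, lv; apply pair_eq; simpl; ring. Qed.
Lemma tpL_add k l : vadd (tpL k) (tpL l) = tpL (k + l).
Proof. unfold tpL, vadd; simpl; rewrite plus_IZR; apply pair_eq; ring. Qed.
Lemma tpL_0 : tpL 0 = (0,0).
Proof. unfold tpL; apply pair_eq; simpl; ring. Qed.
Lemma qv_0 : qv 0 = (0,0).
Proof. unfold qv; apply pair_eq; simpl; ring. Qed.
Lemma QL_0 : QL (0,0).
Proof. exists 0%Z. symmetry; apply qv_0. Qed.
Lemma qv_tp a k : vadd (qv a) (tpL k) = lv a k.
Proof. unfold qv, tpL, lv, vadd; simpl; reflexivity. Qed.
Lemma nfL_mul n k : QL n -> nfL (vadd n (tpL k)) = n.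
Proof. intros [a ->]. unfold nfL, kfL. rewrite qv_tp, c2_lv, zf_IZR. unfold lv, qv; simpl; apply pair_eq; ring. Qed.
Lemma kfL_mul n k : QL n -> kfL (vadd n (tpL k)) = k.
Proof. intros [a ->]. unfold kfL. rewrite qv_tp, c2_lv, zf_IZR. reflexivity. Qed.
Lemma conjL k n : QL n -> vadd (tpL k) n = vadd ((fun _ x => x) k n) (tpL k).
Proof. intros; apply vadd_comm. Qed.
Lemma qv_add a b : vadd (qv a) (qv b) = qv (a + b).
Proof. unfold qv, vadd; simpl; rewrite plus_IZR; apply pair_eq; ring. Qed.

Lemma L1 (Phi : R*R -> R*R -> R) : cocyZ _ PL vadd Phi ->
  exists r : R, cohZ _ PL vadd Phi (fun x y => r * fst x * snd y).
Proof.
  intros Hc.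
  destruct (normalize _ PL vadd PL_add vadd_assoc (0,0) PL_0 vadd_0l vadd_0r QL tpL nfL kfL
     QL_PL tpL_PL tpL_add tpL_0 QL_0 nfL_mul kfL_mul Phi Hc) as [F1 [C1 [Hc1 [N11 N12]]]].
  destruct (zcocy_cob (fun a b => F1 (qv a) (qv b))) as [bz Hbz].
  { intros a b c. pose proof (Hc1 (qv a) (qv b) (qv c)) as H. rewrite !qv_add in H.
    apply H; apply QL_PL; eexists; reflexivity. }
  set (F2 := fun x y => F1 x y - (bz (afL x) + bz (afL y) - bz (afL (vadd x y)))).
  assert (C2 : cohZ _ PL vadd F1 F2).
  { apply (cohZ_cob _ _ _ _ _ (fun x => bz (afL x))). intros; unfold F2; ring. }
  assert (Hc2 : cocyZ _ PL vadd F2) by (apply (cohZ_cocy _ _ _ PL_add vadd_assoc F1); auto).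
  assert (Eq : forall a, QL (qv a)) by (intro a; exists a; reflexivity).
  assert (af_qv : forall a, afL (qv a) = a).
  { intro a. unfold afL. replace (c1 (qv a)) with (IZR a) by (unfold c1, qv; simpl; field; exact HD). apply zf_IZR. }
  assert (af_tp : forall k, afL (tpL k) = 0%Z).
  { intro k. unfold afL. replace (c1 (tpL k)) with (IZR 0) by (unfold c1, tpL; simpl; field; exact HD). apply zf_IZR. }
  assert (af_lv : forall a k, afL (lv a k) = a).
  { intros. unfold afL. rewrite c1_lv. apply zf_IZR. }
  assert (Hbz0 : eqz (bz 0%Z) 0).
  { pose proof (Hbz 0%Z 0%Z) as H. simpl in H. rewrite qv_0, <- tpL_0 in H.
    pose proof (N12 0%Z 0%Z) as H'. unfold eqz in *.
    eapply isint_eq; [|exact (isint_sub _ _ H' H)]. ring. }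
  assert (N21 : forall n k, QL n -> eqz (F2 n (tpL k)) 0).
  { intros n k [a ->]. unfold F2. rewrite qv_tp, af_qv, af_tp, af_lv.
    pose proof (N11 (qv a) k (Eq a)). unfold eqz in *.
    eapply isint_eq; [|exact (isint_sub _ _ H Hbz0)]. ring. }
  assert (N22 : forall k l, eqz (F2 (tpL k) (tpL l)) 0).
  { intros k l. unfold F2. rewrite tpL_add, !af_tp.
    pose proof (N12 k l). unfold eqz in *.
    eapply isint_eq; [|exact (isint_sub _ _ H Hbz0)]. ring. }
  assert (NQ : forall a b, eqz (F2 (qv a) (qv b)) 0).
  { intros a b. unfold F2. rewrite qv_add, !af_qv. pose proof (Hbz a b). unfold eqz in *.
    eapply isint_eq; [|exact H]. ring. }
  assert (Sh := shape _ PL vadd PL_add vadd_assoc QL tpL (fun _ x => x) QL_PL QL_add tpL_PL tpL_add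
      (fun _ n H => H) conjL F2 Hc2 (conj N21 N22)).
  set (H := fun k a => F2 (tpL k) (qv a)).
  assert (Had1 : forall k a b, eqz (H k (a+b)%Z) (H k a + H k b)).
  { intros k a b. unfold H. pose proof (Hc2 (tpL k) (qv a) (qv b) (tpL_PL k) (QL_PL _ (Eq a)) (QL_PL _ (Eq b))) as I.
    rewrite (vadd_comm (tpL k)), qv_add in I.
    pose proof (Sh (qv a) (qv b) k 0%Z (Eq a) (Eq b)) as S. rewrite tpL_0, vadd_0r in S.
    pose proof (NQ a b) as Z0. unfold eqz in *.
    eapply isint_eq; [|exact (isint_sub _ _ S I)]. ring. }
  assert (Had2 : forall k l a, eqz (H (k+l)%Z a) (H k a + H l a)).
  { intros k l a. unfold H. pose proof (Hc2 (tpL k) (tpL l) (qv a) (tpL_PL k) (tpL_PL l) (QL_PL _ (Eq a))) as I.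
    rewrite tpL_add, (vadd_comm (tpL l)) in I.
    pose proof (Sh (qv 0) (qv a) k l (Eq 0%Z) (Eq a)) as S. rewrite qv_0, vadd_0l, <- qv_0 in S.
    pose proof (NQ 0%Z a) as Z0. pose proof (N22 k l) as N. unfold eqz in *.
    eapply isint_eq; [|exact (isint_add _ _ (isint_sub _ _ I N) (isint_add _ _ S Z0))]. ring. }
  set (f0 := H 1%Z 1%Z).
  assert (Hlin : forall k a, eqz (H k a) (IZR a * (IZR k * f0))).
  { intros k a. eapply eqz_trans; [apply (zadd_lin (H k)); intros; apply Had1|].
    apply eqz_mulz. apply (zadd_lin (fun k => H k 1%Z)). intros; apply Had2. }
  set (r := - f0 / (p1 * q2 - q1 * p2)).
  exists r.
  apply (cohZ_trans _ _ _ _ F1); auto.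
  apply (cohZ_trans _ _ _ _ F2); auto.
  apply (cohZ_trans _ _ _ _ (fun x y => f0 * c2 x * c1 y)).
  - apply cohZ_pt. intros x y [m [n ->]] [m' [n' ->]].
    rewrite c2_lv, c1_lv. rewrite <- !qv_tp.
    pose proof (Sh (qv m) (qv m') n n' (Eq m) (Eq m')) as S.
    pose proof (NQ m m') as Z0. pose proof (Hlin n m') as L. fold (H n m') in S. unfold eqz in *.
    eapply isint_eq; [|exact (isint_add _ _ (isint_add _ _ S Z0) L)]. ring.
  - apply (cohZ_cob _ _ _ _ _ (fun x => - (f0 * c2 x * c1 x - r * fst x * snd x) / 2)).
    intros x y _ _. unfold r, c1, c2, vadd; simpl. field. exact HD.
Qed.
End Lam.

Section Lift.
Variables p1 p2 q1 q2 : R.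
Hypothesis HD : p1 * q2 - q1 * p2 <> 0.
Lemma hom_lift (h : R*R -> R) :
  (forall x y, PL p1 p2 q1 q2 x -> PL p1 p2 q1 q2 y -> eqz (h (vadd x y)) (h x + h y)) ->
  exists u1 u2, forall x, PL p1 p2 q1 q2 x -> eqz (h x) (u1 * fst x + u2 * snd x).
Proof.
  intros Hh.
  set (al := h (qv p1 p2 1%Z)). set (be := h (tpL q1 q2 1%Z)).
  exists ((al * q2 - be * p2) / (p1 * q2 - q1 * p2)), ((be * p1 - al * q1) / (p1 * q2 - q1 * p2)).
  intros x [m [n ->]].
  assert (Q1 : forall a, PL p1 p2 q1 q2 (qv p1 p2 a)) by (intro a; apply QL_PL; exists a; reflexivity).
  assert (Hq : forall a, eqz (h (qv p1 p2 a)) (IZR a * al)).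
  { apply (zadd_lin (fun a => h (qv p1 p2 a))). intros a b. rewrite <- qv_add. apply Hh; auto. }
  assert (Ht : forall a, eqz (h (tpL q1 q2 a)) (IZR a * be)).
  { apply (zadd_lin (fun a => h (tpL q1 q2 a))). intros a b. rewrite <- tpL_add. apply Hh; apply tpL_PL. }
  rewrite <- qv_tp. eapply eqz_trans; [apply Hh; [apply Q1|apply tpL_PL]|].
  eapply eqz_trans; [apply eqz_add; [apply Hq|apply Ht]|].
  apply eqz_eq. unfold qv, tpL, vadd; simpl. field. exact HD.
Qed.
End Lift.

Lemma gam_eq (x1 x2 y1 y2 : R) (k l : Z) : x1 = y1 -> x2 = y2 -> k = l -> (((x1, x2), k) : Gam) = ((y1, y2), l).
Proof. intros -> -> ->; reflexivity. Qed.

Section Gamma.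
Variables (e p1 p2 q1 q2 : R) (a b c dd : Z).
Hypothesis He : 1 < e.
Hypothesis HD : p1 * q2 - q1 * p2 <> 0.
Hypothesis M1 : e * p1 = IZR a * p1 + IZR b * q1.
Hypothesis M2 : / e * p2 = IZR a * p2 + IZR b * q2.
Hypothesis M3 : e * q1 = IZR c * p1 + IZR dd * q1.
Hypothesis M4 : / e * q2 = IZR c * p2 + IZR dd * q2.

Let PLe := PL p1 p2 q1 q2.
Lemma e_nz : e <> 0. Proof. lra. Qed.

Lemma det1 : IZR a * IZR dd - IZR b * IZR c = 1.
Proof.
  assert (H : (IZR a * IZR dd - IZR b * IZR c) * (p1 * q2 - q1 * p2) = 1 * (p1 * q2 - q1 * p2)).
  { replace ((IZR a * IZR dd - IZR b * IZR c) * (p1 * q2 - q1 * p2)) with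
       ((IZR a * p1 + IZR b * q1) * (IZR c * p2 + IZR dd * q2) - (IZR c * p1 + IZR dd * q1) * (IZR a * p2 + IZR b * q2)) by ring.
    rewrite <- M1, <- M2, <- M3, <- M4. field. apply e_nz. }
  apply Rmult_eq_reg_r in H; auto.
Qed.

Definition Amap (x : R * R) : R * R := (e * fst x, / e * snd x).
Definition Ainv (x : R * R) : R * R := (/ e * fst x, e * snd x).

Lemma PL_A x : PLe x -> PLe (Amap x).
Proof.
  intros [m [n ->]]. exists (m * a + n * c)%Z, (m * b + n * dd)%Z.
  unfold Amap, lv; simpl. rewrite !plus_IZR, !mult_IZR. apply pair_eq.
  - replace (e * (IZR m * p1 + IZR n * q1)) with (IZR m * (e * p1) + IZR n * (e * q1)) by ring.
    rewrite M1, M3; ring.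
  - replace (/ e * (IZR m * p2 + IZR n * q2)) with (IZR m * (/ e * p2) + IZR n * (/ e * q2)) by ring.
    rewrite M2, M4; ring.
Qed.

Lemma PL_Ainv x : PLe x -> PLe (Ainv x).
Proof.
  pose proof det1 as Hd. pose proof e_nz as Hn.
  intros [m [n ->]]. exists (m * dd - n * c)%Z, (- m * b + n * a)%Z.
  unfold Ainv, lv; simpl. rewrite !plus_IZR, !minus_IZR, !mult_IZR, !opp_IZR. apply pair_eq.
  - apply (Rmult_eq_reg_l e); auto.
    replace (e * (/ e * (IZR m * p1 + IZR n * q1))) with (IZR m * p1 + IZR n * q1) by (field; auto).
    replace (e * ((IZR m * IZR dd - IZR n * IZR c) * p1 + (- IZR m * IZR b + IZR n * IZR a) * q1))
      with ((IZR m * IZR dd - IZR n * IZR c) * (e * p1) + (- IZR m * IZR b + IZR n * IZR a) * (e * q1)) by ring.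
    rewrite M1, M3.
    replace (IZR m * p1 + IZR n * q1) with ((IZR m * p1 + IZR n * q1) * 1) by ring. rewrite <- Hd at 1. ring.
  - apply (Rmult_eq_reg_l (/ e)); [|apply Rinv_neq_0_compat; auto].
    replace (/ e * (e * (IZR m * p2 + IZR n * q2))) with (IZR m * p2 + IZR n * q2) by (field; auto).
    replace (/ e * ((IZR m * IZR dd - IZR n * IZR c) * p2 + (- IZR m * IZR b + IZR n * IZR a) * q2))
      with ((IZR m * IZR dd - IZR n * IZR c) * (/ e * p2) + (- IZR m * IZR b + IZR n * IZR a) * (/ e * q2)) by ring.
    rewrite M2, M4.
    replace (IZR m * p2 + IZR n * q2) with ((IZR m * p2 + IZR n * q2) * 1) by ring. rewrite <- Hd at 1. ring.
Qed.

Lemma pw_succ k : powerRZ e (k + 1) = powerRZ e k * e.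
Proof. rewrite powerRZ_add by apply e_nz. simpl. ring. Qed.
Lemma pw_succ_n k : powerRZ e (- (k + 1)) = powerRZ e (- k) * / e.
Proof. replace (- (k+1))%Z with (- k + -1)%Z by lia. rewrite powerRZ_add by apply e_nz. simpl. field. apply e_nz. Qed.

Lemma PL_Apow k x : PLe x -> PLe (Apow e k x).
Proof.
  revert x. induction k using Z.peano_ind; intros x Hx.
  - unfold Apow; simpl. destruct x; simpl. replace ((1 * r, 1 * r0)) with (r, r0); auto. apply pair_eq; ring.
  - replace (Apow e (Z.succ k) x) with (Amap (Apow e k x)); [apply PL_A; auto|].
    unfold Apow, Amap; simpl. rewrite <- Z.add_1_r, pw_succ, pw_succ_n. apply pair_eq; ring.
  - replace (Apow e (Z.pred k) x) with (Ainv (Apow e k x)); [apply PL_Ainv; auto|].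
    unfold Apow, Ainv; simpl. pose proof (pw_succ (Z.pred k)). pose proof (pw_succ_n (Z.pred k)).
    replace (Z.pred k + 1)%Z with k in * by lia. rewrite H, H0. apply pair_eq; field; apply e_nz.
Qed.

Definition PG (g : Gam) : Prop := PLe (fst g).
Definition QG (g : Gam) : Prop := PLe (fst g) /\ snd g = 0%Z.
Definition oneG : Gam := ((0, 0), 0%Z).
Definition tpG (k : Z) : Gam := ((0, 0), k).
Definition alG (k : Z) (g : Gam) : Gam := (Apow e k (fst g), 0%Z).
Definition nfG (g : Gam) : Gam := (fst g, 0%Z).
Definition kfG (g : Gam) : Z := snd g.
Let mul := Gmul e.

Lemma Gmul_fst g h : fst (Gmul e g h) = vadd (fst g) (Apow e (snd g) (fst h)).
Proof. reflexivity. Qed.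
Lemma PG_mul g h : PG g -> PG h -> PG (mul g h).
Proof. unfold PG, mul; intros; rewrite Gmul_fst. apply PL_add; auto. apply PL_Apow; auto. Qed.
Lemma G_assoc g h k : mul (mul g h) k = mul g (mul h k).
Proof.
  destruct g as [[x1 x2] i]; destruct h as [[y1 y2] j]; destruct k as [[z1 z2] l].
  unfold mul, Gmul, Apow; simpl. rewrite Z.opp_add_distr, !powerRZ_add by apply e_nz.
  apply gam_eq; [ring|ring|lia].
Qed.
Lemma PG_one : PG oneG. Proof. apply PL_0. Qed.
Lemma G_one_l g : mul oneG g = g.
Proof. destruct g as [[x1 x2] i]. unfold mul, Gmul, Apow; simpl. apply gam_eq; [ring|ring|lia]. Qed.
Lemma G_one_r g : mul g oneG = g.
Proof. destruct g as [[x1 x2] i]. unfold mul, Gmul, Apow; simpl. apply gam_eq; [ring|ring|lia]. Qed.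
Lemma QG_PG n : QG n -> PG n. Proof. intros [H _]; exact H. Qed.
Lemma QG_mul n m : QG n -> QG m -> QG (mul n m).
Proof. intros [H1 H2] [H3 H4]. split; [apply PG_mul; auto|]. unfold mul, Gmul; simpl; rewrite H2, H4; reflexivity. Qed.
Lemma tpG_P k : PG (tpG k). Proof. apply PL_0. Qed.
Lemma tpG_add k l : mul (tpG k) (tpG l) = tpG (k + l).
Proof. unfold mul, Gmul, Apow, tpG; simpl. apply gam_eq; [ring|ring|lia]. Qed.
Lemma tpG_0 : tpG 0 = oneG. Proof. reflexivity. Qed.
Lemma QG_one : QG oneG. Proof. split; [apply PL_0|reflexivity]. Qed.
Lemma nfG_mul n k : QG n -> nfG (mul n (tpG k)) = n.
Proof. destruct n as [[x1 x2] i]; intros [_ H]; simpl in H; subst. unfold nfG, mul, Gmul, Apow; simpl. apply gam_eq; [ring|ring|lia]. Qed.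
Lemma kfG_mul n k : QG n -> kfG (mul n (tpG k)) = k.
Proof. destruct n as [[x1 x2] i]; intros [_ H]; simpl in H; subst. reflexivity. Qed.
Lemma alG_Q k n : QG n -> QG (alG k n).
Proof. intros [H _]; split; [apply PL_Apow; auto|reflexivity]. Qed.
Lemma G_conj k n : QG n -> mul (tpG k) n = mul (alG k n) (tpG k).
Proof. destruct n as [[x1 x2] i]; intros [_ H]; simpl in H; subst. unfold mul, alG, Gmul, Apow, tpG; simpl. apply gam_eq; [ring|ring|lia]. Qed.
Lemma G_dec (x : R * R) (k : Z) : ((x, k) : Gam) = mul (x, 0%Z) (tpG k).
Proof. destruct x as [x1 x2]. unfold mul, Gmul, Apow, tpG; simpl. apply gam_eq; [ring|ring|lia]. Qed.
Lemma G_QQ (x y : R * R) : mul (x, 0%Z) (y, 0%Z) = (vadd x y, 0%Z).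
Proof. unfold mul, Gmul, Apow, vadd; simpl. destruct y; simpl. apply gam_eq; [ring|ring|lia]. Qed.

Definition zeta (r : R) (g h : Gam) : R := r * fst (fst g) * (powerRZ e (- snd g) * snd (fst h)).

Lemma zeta_cocycle r : forall g h k, zeta r g h + zeta r (Gmul e g h) k = zeta r h k + zeta r g (Gmul e h k).
Proof.
  intros [[x1 x2] i] [[y1 y2] j] [[z1 z2] l]. unfold zeta, Gmul, Apow; simpl.
  rewrite !Z.opp_add_distr, !powerRZ_add by apply e_nz.
  assert (Hi : powerRZ e i * powerRZ e (- i) = 1).
  { rewrite <- powerRZ_add by apply e_nz. rewrite Z.add_opp_diag_r. reflexivity. }
  replace (r * (x1 + powerRZ e i * y1) * (powerRZ e (- i) * powerRZ e (- j) * z2))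
     with (r * x1 * (powerRZ e (- i) * powerRZ e (- j) * z2) + r * y1 * (powerRZ e i * powerRZ e (- i)) * (powerRZ e (- j) * z2)) by ring.
  rewrite Hi. ring.
Qed.

Lemma QG_x x : PLe x -> QG (x, 0%Z).
Proof. intros; split; auto. Qed.

Lemma Apow_1 x : Apow e 1 x = Amap x.
Proof. unfold Apow, Amap; simpl. apply pair_eq; field; apply e_nz. Qed.

Theorem gamma_main (th : Gam -> Gam -> R) : cocyZ Gam PG mul th ->
  exists r, cohZ Gam PG mul th (zeta r).
Proof.
  intros Hc.
  destruct (normalize Gam PG mul PG_mul G_assoc oneG PG_one G_one_l G_one_r QG tpG nfG kfG
     QG_PG tpG_P tpG_add tpG_0 QG_one nfG_mul kfG_mul th Hc) as [T1 [C1 [Hc1 [N11 N12]]]].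
  set (Phi := fun x y : R * R => T1 (x, 0%Z) (y, 0%Z)).
  assert (HPhi : cocyZ _ PLe vadd Phi).
  { intros x y z Px Py Pz. unfold Phi. pose proof (Hc1 (x,0%Z) (y,0%Z) (z,0%Z) Px Py Pz) as H.
    rewrite !G_QQ in H. exact H. }
  destruct (L1 p1 p2 q1 q2 HD Phi HPhi) as [r [cc Hcc]].
  assert (HQQ1 : forall x y, PLe x -> PLe y -> eqz (T1 (x,0%Z) (y,0%Z)) (r * fst x * snd y + (cc x + cc y - cc (vadd x y)))).
  { intros; apply Hcc; auto. }
  assert (Hc0 : eqz (cc (0,0)) 0).
  { pose proof (HQQ1 (0,0) (0,0) (PL_0 p1 p2 q1 q2) (PL_0 p1 p2 q1 q2)) as H. rewrite vadd_0l in H.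
    pose proof (N12 0%Z 0%Z) as H'. change (tpG 0) with ((0,0),0%Z) in H'. unfold eqz in *; simpl in H.
    eapply isint_eq; [|exact (isint_sub _ _ H' H)]. ring. }
  set (T2 := fun g h => T1 g h - (cc (fst g) + cc (fst h) - cc (fst (mul g h)))).
  assert (C2 : cohZ _ PG mul T1 T2).
  { apply (cohZ_cob _ _ _ _ _ (fun g => cc (fst g))). intros; unfold T2; ring. }
  assert (Hc2 : cocyZ _ PG mul T2) by (apply (cohZ_cocy _ _ _ PG_mul G_assoc T1); auto).
  assert (fst_nt : forall x k, fst (mul (x, 0%Z) (tpG k)) = x).
  { intros [x1 x2] k. unfold mul, Gmul, Apow, tpG; simpl. apply pair_eq; ring. }
  assert (N21 : forall n k, QG n -> eqz (T2 n (tpG k)) 0).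
  { intros [x i] k [Hx Hi]. simpl in Hi; subst i. unfold T2. rewrite fst_nt.
    pose proof (N11 (x,0%Z) k (conj Hx eq_refl)). simpl fst. unfold eqz in *.
    eapply isint_eq; [|exact (isint_sub _ _ H Hc0)]. ring. }
  assert (N22 : forall k l, eqz (T2 (tpG k) (tpG l)) 0).
  { intros k l. unfold T2. rewrite tpG_add. pose proof (N12 k l). simpl fst. unfold eqz in *.
    eapply isint_eq; [|exact (isint_sub _ _ H Hc0)]. ring. }
  assert (Q2 : forall x y, PLe x -> PLe y -> eqz (T2 (x,0%Z) (y,0%Z)) (r * fst x * snd y)).
  { intros x y Px Py. unfold T2. rewrite G_QQ. simpl fst. pose proof (HQQ1 x y Px Py). unfold eqz in *.
    eapply isint_eq; [|exact H]. ring. }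
  assert (Sh2 := shape Gam PG mul PG_mul G_assoc QG tpG alG QG_PG QG_mul tpG_P tpG_add alG_Q G_conj T2 Hc2 (conj N21 N22)).
  set (F := fun m : R * R => T2 (tpG 1) (m, 0%Z)).
  assert (Fadd : forall x y, PLe x -> PLe y -> eqz (F (vadd x y)) (F x + F y)).
  { intros x y Px Py. unfold F.
    pose proof (Hc2 (tpG 1) (x,0%Z) (y,0%Z) (tpG_P 1) Px Py) as I.
    rewrite G_conj in I by (apply QG_x; auto). rewrite G_QQ in I.
    rewrite (G_dec y 0) in I.
    pose proof (Sh2 (alG 1 (x,0%Z)) (y,0%Z) 1%Z 0%Z (alG_Q 1 _ (QG_x _ Px)) (QG_x _ Py)) as S.
    assert (Z1 : eqz (T2 (Amap x, 0%Z) (Amap y, 0%Z)) (r * fst x * snd y)).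
    { eapply eqz_trans; [apply Q2; apply PL_A; auto|]. apply eqz_eq. unfold Amap; simpl; field; apply e_nz. }
    pose proof (Q2 _ _ Px Py) as Z2.
    unfold alG in S, I. simpl fst in S, I. rewrite !Apow_1 in S, I.
    try rewrite <- G_dec in S; try rewrite <- G_dec in I.
    rewrite tpG_0, G_one_r in S, I. rewrite Apow_1 in S.
    unfold eqz in *.
    eapply isint_eq; [|exact (isint_sub _ _ (isint_add _ _ (isint_sub _ _ S I) Z1) Z2)].
    ring. }
  destruct (hom_lift p1 p2 q1 q2 HD F Fadd) as [u1 [u2 Hu]].
  set (w := fun x : R * R => u1 / (1 - e) * fst x + u2 / (1 - / e) * snd x).
  set (T3 := fun g h => T2 g h - (w (fst g) + w (fst h) - w (fst (mul g h)))).
  assert (C3 : cohZ _ PG mul T2 T3).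
  { apply (cohZ_cob _ _ _ _ _ (fun g => w (fst g))). intros; unfold T3; ring. }
  assert (Hc3 : cocyZ _ PG mul T3) by (apply (cohZ_cocy _ _ _ PG_mul G_assoc T2); auto).
  assert (wlin : forall x y, w (vadd x y) = w x + w y).
  { intros; unfold w, vadd; simpl; ring. }
  assert (w0 : w (0,0) = 0) by (unfold w; simpl; ring).
  assert (N31 : forall n k, QG n -> eqz (T3 n (tpG k)) 0).
  { intros [x i] k [Hx Hi]. simpl in Hi; subst i. unfold T3. rewrite fst_nt.
    pose proof (N21 (x,0%Z) k (QG_x _ Hx)). simpl fst. rewrite w0. unfold eqz in *.
    eapply isint_eq; [|exact H]. ring. }
  assert (N32 : forall k l, eqz (T3 (tpG k) (tpG l)) 0).
  { intros k l. unfold T3. rewrite tpG_add. pose proof (N22 k l). simpl fst. rewrite w0. unfold eqz in *.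
    eapply isint_eq; [|exact H]. ring. }
  assert (Q3 : forall x y, PLe x -> PLe y -> eqz (T3 (x,0%Z) (y,0%Z)) (r * fst x * snd y)).
  { intros x y Px Py. unfold T3. rewrite G_QQ. simpl fst. rewrite wlin. pose proof (Q2 x y Px Py). unfold eqz in *.
    eapply isint_eq; [|exact H]. ring. }
  assert (Sh3 := shape Gam PG mul PG_mul G_assoc QG tpG alG QG_PG QG_mul tpG_P tpG_add alG_Q G_conj T3 Hc3 (conj N31 N32)).
  assert (F31 : forall m, PLe m -> eqz (T3 (tpG 1) (m, 0%Z)) 0).
  { intros m Pm. unfold T3. pose proof (Hu m Pm) as H. unfold F in H.
    assert (E : fst (mul (tpG 1) (m, 0%Z)) = Amap m).
    { unfold mul, Gmul, Apow, Amap, tpG; simpl. apply pair_eq; field; apply e_nz. }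
    rewrite E. simpl fst. rewrite w0. unfold eqz in *.
    eapply isint_eq; [|exact H]. unfold w, Amap; simpl. field.
    pose proof e_nz. split; [|lra].
    intro H1. assert (e = 1) by (apply (Rmult_eq_reg_l (/ e)); [|apply Rinv_neq_0_compat; lra]; field_simplify; lra). lra. }
  assert (F3all : forall k m, PLe m -> eqz (T3 (tpG k) (m, 0%Z)) 0).
  { assert (Rec : forall k m, PLe m -> eqz (T3 (tpG (1 + k)) (m, 0%Z)) (T3 (tpG k) (m, 0%Z))).
    { intros k m Pm.
      pose proof (Hc3 (tpG 1) (tpG k) (m,0%Z) (tpG_P 1) (tpG_P k) Pm) as I.
      rewrite tpG_add in I. rewrite G_conj in I by (apply QG_x; auto).
      pose proof (Sh3 oneG (alG k (m,0%Z)) 1%Z k QG_one (alG_Q k _ (QG_x _ Pm))) as S.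
      rewrite G_one_l in S.
      pose proof (N32 1%Z k) as N.
      pose proof (F31 _ (PL_Apow k _ Pm)) as Fa. unfold alG at 1 in S. simpl fst in S.
      assert (Z0 : eqz (T3 oneG (alG 1 (alG k (m, 0%Z)))) 0).
      { unfold alG; simpl fst. eapply eqz_trans; [apply Q3; [apply PL_0|apply PL_Apow, PL_Apow; auto]|].
        apply eqz_eq; simpl; ring. }
      change (alG k (m,0%Z)) with (Apow e k m, 0%Z) in *. unfold eqz in *.
      eapply isint_eq; [|exact (isint_add _ _ (isint_sub _ _ I N) (isint_add _ _ (isint_add _ _ S Fa) Z0))].
      ring. }
    intro k. induction k using Z.peano_ind; intros m Pm.
    - pose proof (Q3 (0,0) m (PL_0 p1 p2 q1 q2) Pm). change (tpG 0) with ((0,0), 0%Z).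
      eapply eqz_trans; [exact H|]. apply eqz_eq; simpl; ring.
    - rewrite <- Z.add_1_l. eapply eqz_trans; [apply Rec; auto|]. auto.
    - pose proof (Rec (Z.pred k) m Pm). replace (1 + Z.pred k)%Z with k in H by lia.
      eapply eqz_trans; [apply eqz_sym; exact H|]. auto. }
  exists r.
  apply (cohZ_trans _ _ _ _ T1); auto.
  apply (cohZ_trans _ _ _ _ T2); auto.
  apply (cohZ_trans _ _ _ _ T3); auto.
  apply cohZ_pt. intros [x k] [y l] Px Py. unfold PG in Px, Py; simpl in Px, Py.
  rewrite (G_dec x k), (G_dec y l).
  pose proof (Sh3 (x,0%Z) (y,0%Z) k l (QG_x _ Px) (QG_x _ Py)) as S.
  pose proof (F3all k y Py) as Fk.
  pose proof (Q3 x (Apow e k y) Px (PL_Apow k _ Py)) as Z0.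
  unfold alG in S; simpl fst in S.
  rewrite <- !G_dec. unfold zeta, Apow in *; simpl in *. unfold eqz in *.
  rewrite <- !G_dec in S. eapply isint_eq; [|exact (isint_add _ _ (isint_add _ _ S Fk) Z0)]. ring.
Qed.

End Gamma.

Lemma Q2R_inject z : Q2R (inject_Z z) = IZR z.
Proof. unfold Q2R, inject_Z; simpl. field. Qed.

Lemma iota1_mul d x y : iota1 d (Kmul d x y) = iota1 d x * iota1 d y.
Proof.
  unfold iota1, Kmul; simpl. rewrite !Q2R_plus, !Q2R_mult, Q2R_inject.
  assert (Hs : sqrt (INR d) * sqrt (INR d) = INR d) by (apply sqrt_sqrt; apply pos_INR).
  rewrite <- INR_IZR_INZ. set (s := sqrt (INR d)) in *. rewrite <- Hs. ring.
Qed.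
Lemma iota2_mul d x y : iota2 d (Kmul d x y) = iota2 d x * iota2 d y.
Proof.
  unfold iota2, Kmul; simpl. rewrite !Q2R_plus, !Q2R_mult, Q2R_inject.
  assert (Hs : sqrt (INR d) * sqrt (INR d) = INR d) by (apply sqrt_sqrt; apply pos_INR).
  rewrite <- INR_IZR_INZ. set (s := sqrt (INR d)) in *. rewrite <- Hs. ring.
Qed.
Lemma iota1_comb d m n w1 w2 : iota1 d (Zcomb m n w1 w2) = IZR m * iota1 d w1 + IZR n * iota1 d w2.
Proof. unfold iota1, Zcomb; simpl. rewrite !Q2R_plus, !Q2R_mult, !Q2R_inject. ring. Qed.
Lemma iota2_comb d m n w1 w2 : iota2 d (Zcomb m n w1 w2) = IZR m * iota2 d w1 + IZR n * iota2 d w2.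
Proof. unfold iota2, Zcomb; simpl. rewrite !Q2R_plus, !Q2R_mult, !Q2R_inject. ring. Qed.
Lemma iota1_Keq d x y : Keq x y -> iota1 d x = iota1 d y.
Proof. intros [H1 H2]; unfold iota1; rewrite (Qeq_eqR _ _ H1), (Qeq_eqR _ _ H2); reflexivity. Qed.
Lemma iota2_Keq d x y : Keq x y -> iota2 d x = iota2 d y.
Proof. intros [H1 H2]; unfold iota2; rewrite (Qeq_eqR _ _ H1), (Qeq_eqR _ _ H2); reflexivity. Qed.

Lemma inLambda_PL d w1 w2 x :
  inLambda d w1 w2 x <-> PL (iota1 d w1) (iota2 d w1) (iota1 d w2) (iota2 d w2) x.
Proof.
  split.
  - intros [l [[m [n Hl]] ->]]. exists m, n. unfold lv.
    rewrite (iota1_Keq _ _ _ Hl), (iota2_Keq _ _ _ Hl), iota1_comb, iota2_comb. reflexivity.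
  - intros [m [n ->]]. exists (Zcomb m n w1 w2). split.
    + exists m, n. split; reflexivity.
    + unfold lv. rewrite iota1_comb, iota2_comb. reflexivity.
Qed.

Theorem lemma5p3 (d : nat) (w1 w2 eps : Kel) (sigma : Gam -> Gam -> C) :
  nonsquare d ->
  spans_K w1 w2 ->
  1 < iota1 d eps ->
  iota2 d eps = / iota1 d eps ->
  stabilizes d w1 w2 eps ->
  is_U1_cocycle (inGamma d w1 w2) (Gmul (iota1 d eps)) sigma ->
  exists zeta : Gam -> Gam -> R,
    is_R_cocycle (inGamma d w1 w2) (Gmul (iota1 d eps)) zeta /\
    cohomologous (inGamma d w1 w2) (Gmul (iota1 d eps)) sigma
      (fun g h => e2pi (zeta g h)).
Proof.
  intros Hns Hsp He He2 Hst [Hmod Hcoc].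
  set (e := iota1 d eps) in *.
  set (p1 := iota1 d w1). set (p2 := iota2 d w1). set (q1 := iota1 d w2). set (q2 := iota2 d w2).
  assert (Hd : (0 < INR d)).
  { destruct d. exfalso; apply Hns; exists 0%nat; reflexivity. apply lt_0_INR; lia. }
  assert (Hs : 0 < sqrt (INR d)) by (apply sqrt_lt_R0; auto).
  assert (HD : p1 * q2 - q1 * p2 <> 0).
  { unfold p1, p2, q1, q2, iota1, iota2.
    replace ((Q2R (fst w1) + Q2R (snd w1) * sqrt (INR d)) * (Q2R (fst w2) - Q2R (snd w2) * sqrt (INR d)) -
      (Q2R (fst w2) + Q2R (snd w2) * sqrt (INR d)) * (Q2R (fst w1) - Q2R (snd w1) * sqrt (INR d)))
      with (- 2 * sqrt (INR d) * Q2R (fst w1 * snd w2 - fst w2 * snd w1))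
      by (rewrite Q2R_minus, !Q2R_mult; ring).
    intro H. apply Hsp. apply eqR_Qeq. rewrite RMicromega.Q2R_0.
    assert (- 2 * sqrt (INR d) <> 0) by lra.
    apply (Rmult_eq_reg_l (- 2 * sqrt (INR d))); auto. rewrite H; ring. }
  assert (Hw1 : inL w1 w2 w1) by (exists 1%Z, 0%Z; split; simpl; ring).
  assert (Hw2 : inL w1 w2 w2) by (exists 0%Z, 1%Z; split; simpl; ring).
  destruct (Hst _ Hw1) as [a [b Hab]].
  destruct (Hst _ Hw2) as [c [dd Hcd]].
  assert (M1 : e * p1 = IZR a * p1 + IZR b * q1).
  { unfold e, p1, q1. rewrite <- iota1_mul, <- iota1_comb. apply iota1_Keq; auto. }
  assert (M2 : / e * p2 = IZR a * p2 + IZR b * q2).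
  { unfold p2, q2. rewrite <- He2, <- iota2_mul, <- iota2_comb. apply iota2_Keq; auto. }
  assert (M3 : e * q1 = IZR c * p1 + IZR dd * q1).
  { unfold e, p1, q1. rewrite <- iota1_mul, <- iota1_comb. apply iota1_Keq; auto. }
  assert (M4 : / e * q2 = IZR c * p2 + IZR dd * q2).
  { unfold p2, q2. rewrite <- He2, <- iota2_mul, <- iota2_comb. apply iota2_Keq; auto. }
  assert (HG : forall g, inGamma d w1 w2 g <-> PG p1 p2 q1 q2 g).
  { intro g. unfold inGamma, PG. apply inLambda_PL. }
  assert (Harg : forall g h, exists t, Cmod (sigma g h) = 1 -> sigma g h = e2pi t).
  { intros g h. destruct (classic (Cmod (sigma g h) = 1)) as [H|H].
    - destruct (unit_arg _ H) as [t Ht]. exists t; auto.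
    - exists 0; intro; contradiction. }
  set (th := fun g h => proj1_sig (constructive_indefinite_description _ (Harg g h))).
  assert (Hth : forall g h, inGamma d w1 w2 g -> inGamma d w1 w2 h -> sigma g h = e2pi (th g h)).
  { intros g h Hg Hh. unfold th. destruct (constructive_indefinite_description _ (Harg g h)) as [t Ht]. simpl.
    apply Ht, Hmod; auto. }
  assert (Hmul : forall g h, inGamma d w1 w2 g -> inGamma d w1 w2 h -> inGamma d w1 w2 (Gmul e g h)).
  { intros g h Hg Hh. apply HG. apply (PG_mul e p1 p2 q1 q2 a b c dd); auto; apply HG; auto. }
  assert (Hcz : cocyZ Gam (PG p1 p2 q1 q2) (Gmul e) th).
  { intros g h k Pg Ph Pk. apply HG in Pg, Ph, Pk.
    apply e2pi_inj. rewrite !e2pi_add, <- !Hth; auto. }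
  destruct (gamma_main e p1 p2 q1 q2 a b c dd He HD M1 M2 M3 M4 th Hcz) as [r [bb Hbb]].
  exists (zeta e r). split.
  - intros g h k _ _ _. apply zeta_cocycle; auto.
  - exists (fun g => e2pi (bb g)). split.
    + intros; apply e2pi_mod.
    + intros g h Hg Hh. rewrite Hth by auto.
      rewrite (e2pi_eqz _ _ (Hbb g h (proj1 (HG g) Hg) (proj1 (HG h) Hh))).
      rewrite e2pi_inv, <- !e2pi_add. f_equal; ring.
Qed.
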